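(* For integers $n\ge 1$ and $0\le k\le n$, the number of ordered pairs $(P,Q)$ of $n$-step walks starting at the origin, each step being $(1,0)$ (E) or $(0,1)$ (N), whose vertex sets have exactly $k$ points in common other than the origin, is $2^k\binom{2n-k}{n}$.
   Context: An $n$-step walk starting at the origin is a sequence of lattice points $v_0=(0,0),v_1,\dots,v_n$ with $v_i-v_{i-1}\in\{(1,0),(0,1)\}$; its vertex set is $\{v_0,\dots,v_n\}$. The endpoints of the two walks are not required to coincide. *)

(* Defs.v *)
From mathcomp Require Import all_boot.
Set Implicit Arguments. Unset Strict Implicit. Unset Printing Implicit Defensive.

(* A step is a bool: true = E = (1,0), false = N = (0,1).
   An n-step walk from the origin is an n.-tuple of steps. *)

Definition vertex (s : seq bool) (i : nat) : nat * nat :=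
  (count id (take i s), count negb (take i s)).

Definition vertices (s : seq bool) : seq (nat * nat) :=
  [seq vertex s i | i <- iota 0 (size s).+1].

Definition common_nonorigin (s t : seq bool) : nat :=
  size (undup [seq p <- vertices s | (p != (0, 0)) && (p \in vertices t)]).

(* Main.v *)
Require Import Defs.
From mathcomp Require Import all_boot.
From mathcomp Require Import zify.
Set Implicit Arguments. Unset Strict Implicit. Unset Printing Implicit Defensive.

Fixpoint zc (a b : nat) (s t : seq bool) : nat :=
  match s, t with
  | x :: s', y :: t' => ((a + x == b + y) : nat) + zc (a + x) (b + y) s' t'
  | _, _ => 0
  end.

Lemma zc_shift j a b s t : zc (a + j) (b + j) s t = zc a b s t.
Proof.
elim: s a b t => [|x s IH] a b [|y t] //=.
by rewrite (addnAC a) (addnAC b) eqn_add2r IH.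
Qed.

Lemma zc_sym a b s t : zc a b s t = zc b a t s.
Proof.
elim: s a b t => [|x s IH] a b [|y t] //=; by rewrite IH eq_sym.
Qed.

Lemma zc_le a b s t : zc a b s t <= size s.
Proof.
elim: s a b t => [|x s IH] a b [|y t] //=.
by rewrite -addn1 addnC leq_add // leq_b1.
Qed.

Lemma sum_tupleS n (F : n.+1.-tuple bool -> nat) :
  \sum_(t : n.+1.-tuple bool) F t =
  \sum_(x : bool) \sum_(t : n.-tuple bool) F [tuple of x :: t].
Proof.
rewrite pair_bigA /=.
rewrite (reindex (fun p : bool * n.-tuple bool => [tuple of p.1 :: p.2])) //.
exists (fun t : n.+1.-tuple bool => (thead t, [tuple of behead t])).
  move=> [x t] _ /=; congr (_, _); by apply: val_inj.
move=> t _; by rewrite [in RHS](tuple_eta t).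
Qed.

Definition cnt m a b k :=
  \sum_(P : m.-tuple bool) \sum_(Q : m.-tuple bool) ((zc a b P Q == k) : nat).

Lemma cnt0 a b k : cnt 0 a b k = (k == 0).
Proof.
rewrite /cnt.
rewrite (big_pred1 [tuple]) ?(big_pred1 [tuple]) /=; first by rewrite eq_sym.
all: by move=> t; have -> := tuple0 t; rewrite /= eqxx.
Qed.

Lemma cntS m a b k : cnt m.+1 a b k =
  \sum_(x : bool) \sum_(y : bool)
    (if a + x == b + y then (if k is k'.+1 then cnt m (a + x) (b + y) k' else 0)
     else cnt m (a + x) (b + y) k).
Proof.
rewrite /cnt sum_tupleS.
apply: eq_bigr => x _.
rewrite exchange_big sum_tupleS.
apply: eq_bigr => y _.
rewrite exchange_big /=.
case: eqP => E.
  case: k => [|k].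
    by apply: big1 => P _; apply: big1 => Q _.
  by apply: eq_bigr => P _; apply: eq_bigr => Q _; rewrite /= add1n eqSS.
by apply: eq_bigr => P _; apply: eq_bigr => Q _.
Qed.

Lemma cnt_shift m j a b k : cnt m (a + j) (b + j) k = cnt m a b k.
Proof. by rewrite /cnt; apply: eq_bigr => P _; apply: eq_bigr => Q _; rewrite zc_shift. Qed.

Lemma cnt_sym m a b k : cnt m a b k = cnt m b a k.
Proof.
rewrite /cnt exchange_big; apply: eq_bigr => P _; apply: eq_bigr => Q _; by rewrite zc_sym.
Qed.

Lemma cnt_big m a b k : m < k -> cnt m a b k = 0.
Proof.
move=> H; rewrite /cnt; apply: big1 => P _; apply: big1 => Q _.
have := zc_le a b P Q; rewrite size_tuple => H2.
case: eqP => // E; move: H2; rewrite E => H2; by have := leq_trans H H2; rewrite ltnn.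
Qed.

Lemma cnt_total m a b : \sum_(k < m.+1) cnt m a b k = 4 ^ m.
Proof.
rewrite /cnt exchange_big /=.
under eq_bigr => P _ do rewrite exchange_big /=.
have H : forall P Q : m.-tuple bool, \sum_(k < m.+1) ((zc a b P Q == k) : nat) = 1.
  move=> P Q.
  have Hl : zc a b P Q < m.+1 by rewrite ltnS; have := zc_le a b P Q; rewrite size_tuple.
  rewrite (bigD1 (Ordinal Hl)) //= eqxx big1 // => i /negbTE Hi.
  case: eqP => // E; move: Hi; suff -> : i = Ordinal Hl by rewrite eqxx.
  by apply: val_inj; rewrite /= E.
under eq_bigr => P _ do under eq_bigr => Q _ do rewrite H.
rewrite sum_nat_const card_tuple card_bool sum_nat_const card_tuple card_bool.
by rewrite muln1 -expnMn.
Qed.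

Lemma identL n r : \sum_(k < n.+1) 2 ^ k * 'C(n + r - k, r) = \sum_(j < n.+1) 'C(n + r + 1, j).
Proof.
elim: n => [|n IH].
  by rewrite !big_ord_recl !big_ord0 /= add0n subn0 binn bin0.
rewrite big_ord_recl /= expn0 mul1n subn0.
have E1 : \sum_(i < n.+1) 2 ^ bump 0 i * 'C(n.+1 + r - bump 0 i, r)
          = 2 * \sum_(k < n.+1) 2 ^ k * 'C(n + r - k, r).
  rewrite big_distrr; apply: eq_bigr => i _.
  by rewrite /bump /= add1n expnS addSn subSS mulnA.
rewrite E1 IH.
rewrite [in RHS]big_ord_recl bin0.
have E2 : \sum_(i < n.+1) 'C(n.+1 + r + 1, bump 0 i)
   = \sum_(i < n.+1) 'C(n + r + 1, i.+1) + \sum_(i < n.+1) 'C(n + r + 1, i).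
  rewrite -big_split; apply: eq_bigr => i _.
  by rewrite /bump /= add1n addSn binS.
rewrite E2.
have E3 : 1 + \sum_(i < n.+1) 'C(n + r + 1, i.+1)
          = \sum_(i < n.+1) 'C(n + r + 1, i) + 'C(n + r + 1, n.+1).
  have A : \sum_(i < n.+2) 'C(n + r + 1, i) = 1 + \sum_(i<n.+1) 'C(n + r + 1,i.+1)
    by rewrite big_ord_recl bin0.
  have B : \sum_(i < n.+2) 'C(n + r + 1, i) = \sum_(i<n.+1) 'C(n + r + 1,i) + 'C(n + r + 1,n.+1)
    by rewrite big_ord_recr.
  by rewrite -A B.
have E4 : 'C(n + r + 1, n.+1) = 'C(n.+1 + r, r).
  rewrite -(bin_sub (n := n.+1 + r) (m := r)); last by rewrite leq_addl.
  by congr 'C(_, _); lia.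
lia.
Qed.

Lemma halfsum m : \sum_(j < m.+1) 'C(2 * m + 1, j) = 4 ^ m.
Proof.
have F : (1 + 1) ^ (2 * m + 1) = \sum_(0 <= i < (2 * m + 1).+1) 'C(2 * m + 1, i).
  rewrite expnDn big_mkord; apply: eq_bigr => i _; by rewrite !exp1n !muln1.
rewrite (big_cat_nat _ (n := m.+1)) //= in F; last by lia.
rewrite (big_addn 0 _ m.+1) in F.
rewrite [X in _ = _ + X]big_nat_rev /= in F.
have E : \sum_(0 <= i < (2 * m + 1).+1 - m.+1) 'C(2 * m + 1, 0 + (2 * m + 1).+1 - m.+1 - i.+1 + m.+1)
     = \sum_(0 <= i < m.+1) 'C(2 * m + 1, i).
  have -> : (2 * m + 1).+1 - m.+1 = m.+1 by lia.
  apply: eq_big_nat => i /andP [_ Hi].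
  rewrite -(bin_sub (n := 2 * m + 1) (m := i)); last by lia.
  by congr 'C(_, _); lia.
rewrite E big_mkord in F.
have H2 : (1 + 1) ^ (2 * m + 1) = 2 * 4 ^ m by rewrite expnD expnM mulnC.
lia.
Qed.

Lemma ident m : \sum_(k < m.+1) 2 ^ k * 'C(2 * m - k, m) = 4 ^ m.
Proof.
rewrite -halfsum.
have -> : 2 * m + 1 = m + m + 1 by lia.
rewrite -(identL m m); apply: eq_bigr => i _.
by have -> : m + m - i = 2 * m - i by lia.
Qed.
Lemma cntS' m a b k : cnt m.+1 a b k =
  let f x y := if x == y then (if k is k'.+1 then cnt m x y k' else 0) else cnt m x y k in
  f a.+1 b.+1 + f a.+1 b + f a b.+1 + f a b.
Proof.
rewrite cntS !big_bool.
rewrite !addn1 !addn0 /=.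
rewrite [LHS]addnA.
done.
Qed.
Arguments cnt : simpl never.
Definition C m D k := cnt m 0 D k.
Lemma cnt_shift1 m a b k : cnt m a.+1 b.+1 k = cnt m a b k.
Proof. by rewrite -(addn1 a) -(addn1 b) cnt_shift. Qed.
Lemma R0 m k : C m.+1 0 k = 2 * (if k is k'.+1 then C m 0 k' else 0) + 2 * C m 1 k.
Proof.
rewrite /C cntS' /= (cnt_sym m 1 0).
case: k => [|k]; rewrite ?cnt_shift1; lia.
Qed.

Lemma R1 m k : C m.+1 1 k = 2 * C m 1 k + C m 2 k + (if k is k'.+1 then C m 0 k' else 0).
Proof.
rewrite /C cntS' /=.
case: k => [|k]; rewrite ?cnt_shift1; lia.
Qed.

Lemma R2 m D k : C m.+1 D.+2 k = 2 * C m D.+2 k + C m D.+3 k + C m D.+1 k.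
Proof.
rewrite /C cntS' /= !cnt_shift1; lia.
Qed.

Definition F0 m k := if k <= m then 2 ^ k * 'C(2 * m - k, m) else 0.

Lemma compl m : (forall k, 0 < k -> C m 0 k = F0 m k) -> C m 0 0 = 'C(2 * m, m).
Proof.
move=> H.
have T := cnt_total m 0 0. have I := ident m.
rewrite big_ord_recl in T; rewrite big_ord_recl in I.
have E : \sum_(i < m) cnt m 0 0 (lift ord0 i) = \sum_(i < m) 2 ^ (lift ord0 i) * 'C(2 * m - lift ord0 i, m).
  apply: eq_bigr => i _; rewrite -/(C m 0 _) H /F0 ?ifT //.
  by rewrite lift0.
rewrite E in T.
rewrite /C; move: T I; rewrite /= expn0 mul1n subn0; lia.
Qed.

Lemma main m : (forall k, C m 0 k = F0 m k) /\
  (forall D k, 0 < D -> 0 < k -> C m D k = 2 ^ k.-1 * 'C(2 * m + 1 - k, m + D)).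
Proof.
elim: m => [|m [IH0 IH1]].
  split.
    by move=> k; rewrite /C cnt0 /F0; case: k.
  move=> D k HD Hk; rewrite /C cnt0; case: k Hk => // k _.
  have -> : 2 * 0 + 1 - k.+1 = 0 by lia.
  by rewrite bin0n add0n; case: D HD => // D _; rewrite muln0.
have P1 : forall D k, 0 < D -> 0 < k -> C m.+1 D k = 2 ^ k.-1 * 'C(2 * m.+1 + 1 - k, m.+1 + D).
  move=> D k HD Hk.
  case: (leqP k m.+1) => Hkm; last first.
    rewrite /C cnt_big // bin_small ?muln0 //; lia.
  case: k Hk Hkm => // k _ Hkm.
  case: D HD => // [[|D]] _.
    rewrite R1 IH1 // IH1 // IH0 /F0 ifT //=.
    have -> : 2 * m.+1 + 1 - k.+1 = (2 * m - k).+2 by lia.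
    have -> : 2 * m + 1 - k.+1 = 2 * m - k by lia.
    have -> : m.+1 + 1 = m.+2 by lia.
    rewrite !addn1 addn2 !binS; nia.
  rewrite R2 !IH1 //=.
  have -> : 2 * m.+1 + 1 - k.+1 = (2 * m - k).+2 by lia.
  have -> : 2 * m + 1 - k.+1 = 2 * m - k by lia.
  have -> : m.+1 + D.+2 = (m + D.+1).+2 by lia.
  have -> : m + D.+3 = (m + D.+1).+2 by lia.
  have -> : m + D.+2 = (m + D.+1).+1 by lia.
  rewrite !binS; nia.
have P0 : forall k, 0 < k -> C m.+1 0 k = F0 m.+1 k.
  move=> k Hk.
  case: (leqP k m.+1) => Hkm; last first.
    rewrite /C cnt_big // /F0 ifF //; lia.
  case: k Hk Hkm => // k _ Hkm.
  rewrite R0 IH0 IH1 // /F0 ifT // ifT //=.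
  have -> : 2 * m.+1 - k.+1 = (2 * m - k).+1 by lia.
  have -> : 2 * m + 1 - k.+1 = 2 * m - k by lia.
  rewrite addn1 binS expnS; nia.
split; last exact: P1.
case => [|k]; last exact: P0.
rewrite (compl P0) /F0 /= expn0 mul1n subn0 //.
Qed.

Lemma zc_count a b s t : size s = size t ->
  zc a b s t = count (fun i => a + count id (take i s) == b + count id (take i t)) (iota 1 (size s)).
Proof.
elim: s a b t => [|x s IH] a b [|y t] //= [E].
rewrite (IH _ _ _ E) !take0 /= !addn0.
congr (_ + _).
rewrite [iota 2 _](iotaDl 1 1) count_map; apply: eq_count => i /=.
by rewrite !addnA.
Qed.

Lemma vsum s i : i <= size s -> (vertex s i).1 + (vertex s i).2 = i.
Proof.
move=> Hi; rewrite /vertex /=.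
have := count_predC id (take i s); rewrite size_takel //.
Qed.

Lemma cno s t : size s = size t -> common_nonorigin s t = zc 0 0 s t.
Proof.
move=> E; rewrite zc_count // /common_nonorigin [vertices s]/vertices filter_map.
set VT := vertices t.
rewrite undup_id; last first.
  rewrite map_inj_in_uniq ?filter_uniq ?iota_uniq //.
  move=> i j; rewrite !mem_filter !mem_iota /= => /andP [_ Hi] /andP [_ Hj] V.
  have := @vsum s i; have := @vsum s j; rewrite V; lia.
rewrite size_map size_filter /=.
have -> : vertex s 0 = (0, 0) by rewrite /vertex take0.
rewrite eqxx /= add0n.
apply: eq_in_count => i; rewrite mem_iota => /andP [Hi1 Hi2] /=.
have Hs : i <= size s by lia.
have Ht : i <= size t by lia.
have H0 : (vertex s i != (0, 0)) = true.
  apply/eqP => V; have := vsum Hs; rewrite V /=; lia.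
rewrite H0 /= !add0n.
have -> : (vertex s i \in VT) = (vertex s i == vertex t i).
  apply/idP/idP.
    rewrite /vertices => /mapP [j]; rewrite mem_iota => /andP [_ Hj] V.
    have Hj' : j <= size t by lia.
    have A := @vsum t j Hj'; have B := vsum Hs; rewrite -V in A.
    have E2 : i = j by lia.
    by rewrite E2 in V *; rewrite V.
  move/eqP => ->; apply: map_f; rewrite mem_iota; lia.
rewrite /vertex xpair_eqE.
have := vsum Hs; have := vsum Ht; rewrite /vertex /=.
case: eqP => //= ->; lia.
Qed.

Theorem theorem3 (n k : nat) (hn : 1 <= n) (hk : k <= n) :
  #|[set PQ : n.-tuple bool * n.-tuple bool |
      common_nonorigin PQ.1 PQ.2 == k]| = 2 ^ k * 'C(2 * n - k, n).
Proof.
have -> : #|[set PQ : n.-tuple bool * n.-tuple bool | common_nonorigin PQ.1 PQ.2 == k]|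
   = \sum_(PQ : n.-tuple bool * n.-tuple bool) ((zc 0 0 PQ.1 PQ.2 == k) : nat).
  rewrite -sum1_card big_mkcond /=; apply: eq_bigr => PQ _.
  rewrite inE cno ?size_tuple //; by case: eqP.
rewrite -(pair_bigA _ (fun P Q : n.-tuple bool => ((zc 0 0 P Q == k) : nat))) /=.
rewrite -/(cnt n 0 0 k) -/(C n 0 k) (main n).1 /F0 ifT //.
Qed.
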